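(* For any set $X$, the free left Ehresmann monoid $\mathrm{FLE}(X)$ on $X$ can be equipped with a unary operation $*$ making it a $*$-left Ehresmann monoid (with $a^*$ the least right identity of $a$ among the projections).
   Context: A left Ehresmann monoid is a monoid with a unary operation $a\mapsto a^+$ satisfying $x^+x=x$, $(x^+y^+)^+=x^+y^+$, $x^+y^+=y^+x^+$, $(xy)^+=(xy^+)^+$; these form a variety of algebras of type $(2,1,0)$, and $\mathrm{FLE}(X)$ is the free object on $X$ in it. Its projections are $E=\{a^+\}$. A $*$-left Ehresmann monoid is a monoid with two unary operations $+,*$ such that $(M,+)$ is left Ehresmann, $M$ satisfies $xx^*=x$, $(x^* )^*=x^*$, $x^*y^*=y^*x^*$, $(xy^* )^*y^*=(xy^* )^*$, and $(x^* )^+=x^*$, $(x^+)^*=x^+$. *)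

(* Defs.v *)
Definition is_left_ehresmann (M : Type) (mul : M -> M -> M) (one : M)
  (plus : M -> M) : Prop :=
  (forall x y z, mul x (mul y z) = mul (mul x y) z) /\
  (forall x, mul one x = x) /\
  (forall x, mul x one = x) /\
  (forall x, mul (plus x) x = x) /\
  (forall x y, plus (mul (plus x) (plus y)) = mul (plus x) (plus y)) /\
  (forall x y, mul (plus x) (plus y) = mul (plus y) (plus x)) /\
  (forall x y, plus (mul x y) = plus (mul x (plus y))).

Definition is_LE_hom (M : Type) (mul : M -> M -> M) (one : M) (plus : M -> M)
  (N : Type) (mulN : N -> N -> N) (oneN : N) (plusN : N -> N) (h : M -> N) : Prop :=
  (forall x y, h (mul x y) = mulN (h x) (h y)) /\
  h one = oneN /\
  (forall x, h (plus x) = plusN (h x)).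

Definition is_free_left_ehresmann (X : Type) (M : Type) (mul : M -> M -> M)
  (one : M) (plus : M -> M) (i : X -> M) : Prop :=
  is_left_ehresmann M mul one plus /\
  forall (N : Type) (mulN : N -> N -> N) (oneN : N) (plusN : N -> N),
    is_left_ehresmann N mulN oneN plusN ->
    forall f : X -> N,
      exists h : M -> N,
        is_LE_hom M mul one plus N mulN oneN plusN h /\
        (forall x, h (i x) = f x) /\
        (forall h' : M -> N,
            is_LE_hom M mul one plus N mulN oneN plusN h' ->
            (forall x, h' (i x) = f x) -> forall m, h' m = h m).

Definition is_star_left_ehresmann (M : Type) (mul : M -> M -> M) (one : M)
  (plus star : M -> M) : Prop :=
  is_left_ehresmann M mul one plus /\
  (forall x, mul x (star x) = x) /\
  (forall x, star (star x) = star x) /\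
  (forall x y, mul (star x) (star y) = mul (star y) (star x)) /\
  (forall x y, mul (star (mul x (star y))) (star y) = star (mul x (star y))) /\
  (forall x, plus (star x) = star x) /\
  (forall x, star (plus x) = plus x).

Definition is_projection (M : Type) (plus : M -> M) (e : M) : Prop :=
  exists a, e = plus a.

Definition proj_le (M : Type) (mul : M -> M -> M) (e f : M) : Prop :=
  e = mul e f.

Definition least_right_identity_proj (M : Type) (mul : M -> M -> M)
  (plus : M -> M) (a s : M) : Prop :=
  is_projection M plus s /\ mul a s = a /\
  (forall e, is_projection M plus e -> mul a e = a -> proj_le M mul s e).

(* Main.v *)
Require Import Defs.
From Stdlib Require Import ProofIrrelevance Arith.

Definition Inv {M : Type} (mul : M -> M -> M) (plus : M -> M) (a s : M) (m : nat) : Prop :=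
  plus s = s /\ mul a s = a /\ (m = 0 -> s = a /\ plus a = a).

Record NT {M : Type} (mul : M -> M -> M) (plus : M -> M) := mkN
  { na : M; ns : M; nl : nat; ni : Inv mul plus na ns nl }.
Arguments mkN {M mul plus}.
Arguments na {M mul plus}.
Arguments ns {M mul plus}.
Arguments nl {M mul plus}.
Arguments ni {M mul plus}.

Section Aux.
End Aux.

Lemma le_plus1 M mul one plus : is_left_ehresmann M mul one plus -> plus one = one.
Proof. intros (A&L&R&P&P5&C&P7). rewrite <- (R (plus one)). apply P. Qed.

Lemma le_pp M mul one plus : is_left_ehresmann M mul one plus ->
  forall a, plus (plus a) = plus a.
Proof. intros H a. pose proof (le_plus1 _ _ _ _ H) as H1.
  destruct H as (A&L&R&P&P5&C&P7).
  pose proof (P5 a one) as E. rewrite H1, R in E. exact E. Qed.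

Lemma proj_comm M mul one plus : is_left_ehresmann M mul one plus ->
  forall u v, plus u = u -> plus v = v -> mul u v = mul v u.
Proof. intros (A&L&R&P&P5&C&P7) u v Hu Hv. rewrite <- Hu, <- Hv. apply C. Qed.

Lemma proj_mul M mul one plus : is_left_ehresmann M mul one plus ->
  forall u v, plus u = u -> plus v = v -> plus (mul u v) = mul u v.
Proof. intros (A&L&R&P&P5&C&P7) u v Hu Hv. rewrite <- Hu, <- Hv. apply P5. Qed.

Lemma proj_idem M mul one plus : is_left_ehresmann M mul one plus ->
  forall u, plus u = u -> mul u u = u.
Proof. intros H u Hu. pose proof H as (A&L&R&P&P5&C&P7).
  pose proof (P u) as E. rewrite Hu in E. exact E. Qed.

Lemma inv_mul M mul one plus : is_left_ehresmann M mul one plus ->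
  forall a s m b t n, Inv mul plus a s m -> Inv mul plus b t n ->
  Inv mul plus (mul a b) (if Nat.eqb n 0 then mul s t else t) (m + n).
Proof.
  intros H a s m b t n (Hs & Has & Hm) (Ht & Hbt & Hn).
  pose proof H as (A&L&R&P&P5&C&P7).
  destruct n as [|n]; simpl.
  - destruct (Hn eq_refl) as [Etb Hb]. subst t.
    split; [|split].
    + apply (proj_mul _ _ _ _ H); auto.
    + rewrite <- A. rewrite (A b s b).
      rewrite (proj_comm _ _ _ _ H b s) by auto.
      rewrite <- (A s b b). rewrite (proj_idem _ _ _ _ H b Hb).
      rewrite A, Has. reflexivity.
    + intros E. destruct m; [|discriminate]. destruct (Hm eq_refl) as [Esa Ha].
      subst s. split; [reflexivity|]. apply (proj_mul _ _ _ _ H); auto.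
  - split; [auto|split].
    + rewrite <- A, Hbt. reflexivity.
    + intros E. rewrite Nat.add_succ_r in E. discriminate.
Qed.

Lemma inv_plus M mul one plus : is_left_ehresmann M mul one plus ->
  forall a, Inv mul plus (plus a) (plus a) 0.
Proof. intros H a. pose proof (le_pp _ _ _ _ H a) as Hp.
  split; [auto|split]. apply (proj_idem _ _ _ _ H); auto. intros _; auto. Qed.

Lemma inv_one M mul one plus : is_left_ehresmann M mul one plus ->
  Inv mul plus one one 0.
Proof. intros H. pose proof (le_plus1 _ _ _ _ H) as H1. pose proof H as (A&L&R&_).
  split; [auto|split]; auto. Qed.

Lemma inv_gen M mul one plus : is_left_ehresmann M mul one plus ->
  forall x, Inv mul plus x one 1.
Proof. intros H x. pose proof (le_plus1 _ _ _ _ H) as H1. pose proof H as (A&L&R&_).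
  split; [auto|split]; auto. intros E; discriminate. Qed.

Lemma NT_eq {M mul plus} (x y : @NT M mul plus) :
  na x = na y -> ns x = ns y -> nl x = nl y -> x = y.
Proof. destruct x, y; simpl; intros; subst. f_equal. apply proof_irrelevance. Qed.

Definition nmul {M mul one plus} (H : is_left_ehresmann M mul one plus)
  (x y : NT mul plus) : NT mul plus :=
  mkN (mul (na x) (na y)) (if Nat.eqb (nl y) 0 then mul (ns x) (ns y) else ns y)
      (nl x + nl y) (inv_mul _ _ _ _ H _ _ _ _ _ _ (ni x) (ni y)).

Definition nplus {M mul one plus} (H : is_left_ehresmann M mul one plus)
  (x : NT mul plus) : NT mul plus :=
  mkN (plus (na x)) (plus (na x)) 0 (inv_plus _ _ _ _ H (na x)).

Definition none {M mul one plus} (H : is_left_ehresmann M mul one plus) : NT mul plus :=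
  mkN one one 0 (inv_one _ _ _ _ H).

Lemma N_LE M mul one plus (H : is_left_ehresmann M mul one plus) :
  is_left_ehresmann (NT mul plus) (nmul H) (none H) (nplus H).
Proof.
  pose proof H as (A&L&R&P&P5&C&P7).
  split; [|split; [|split; [|split; [|split; [|split]]]]].
  - intros [a s m ia] [b t n ib] [c u p ic]. apply NT_eq; simpl.
    + apply A.
    + destruct n, p; simpl; auto.
    + apply Nat.add_assoc.
  - intros [b t n ib]. apply NT_eq; simpl; auto. destruct n; simpl; auto.
  - intros [b t n ib]. apply NT_eq; simpl; auto.
  - intros [a s m ia]. apply NT_eq; simpl; auto.
    destruct m; simpl; auto. destruct ia as (_&_&Hm). destruct (Hm eq_refl) as [E _].
    subst s. apply P.
  - intros x y. apply NT_eq; simpl; auto.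
  - intros x y. apply NT_eq; simpl; auto.
  - intros x y. apply NT_eq; simpl; auto.
Qed.

Theorem mainTheorem3 (X : Type) (M : Type) (mul : M -> M -> M) (one : M)
  (plus : M -> M) (i : X -> M) :
  is_free_left_ehresmann X M mul one plus i ->
  exists star : M -> M,
    is_star_left_ehresmann M mul one plus star /\
    (forall a, least_right_identity_proj M mul plus a (star a)).
Proof.
  intros [H U].
  destruct (U _ _ _ _ (N_LE _ _ _ _ H) (fun x => mkN (i x) one 1 (inv_gen _ _ _ _ H (i x))))
    as (h & (hm & h1 & hp) & hi & _).
  destruct (U _ _ _ _ H i) as (h0 & _ & _ & hu).
  assert (Hid : forall m, na (h m) = m).
  { intros m. rewrite (hu (fun m => na (h m))), (hu (fun m => m)); auto.
    - split; [|split]; auto.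
    - split; [|split].
      + intros x y. rewrite hm. reflexivity.
      + rewrite h1. reflexivity.
      + intros x. rewrite hp. reflexivity.
    - intros x. rewrite hi. reflexivity. }
  pose proof H as (A&L&R&P&P5&C&P7).
  set (star := fun m => ns (h m)).
  set (len := fun m => nl (h m)).
  assert (Sm : forall a b, star (mul a b) =
     if Nat.eqb (len b) 0 then mul (star a) (star b) else star b).
  { intros a b. unfold star, len. rewrite hm. reflexivity. }
  assert (Sp : forall a, star (plus a) = plus a).
  { intros a. unfold star. rewrite hp. simpl. rewrite Hid. reflexivity. }
  assert (Lp : forall a, len (plus a) = 0).
  { intros a. unfold len. rewrite hp. reflexivity. }
  assert (Iv : forall a, plus (star a) = star a /\ mul a (star a) = a).
  { intros a. destruct (ni (h a)) as (H1 & H2 & _). rewrite Hid in H2. split; auto. }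
  assert (SS : forall a, star (star a) = star a).
  { intros a. pose proof (Sp (star a)) as E. rewrite (proj1 (Iv a)) in E. exact E. }
  assert (LS : forall a, len (star a) = 0).
  { intros a. pose proof (Lp (star a)) as E. rewrite (proj1 (Iv a)) in E. exact E. }
  exists star. split.
  - split; [exact H|]. split; [|split; [|split; [|split; [|split]]]].
    + intros x. apply Iv.
    + apply SS.
    + intros x y. apply (proj_comm _ _ _ _ H); apply Iv.
    + intros x y. rewrite Sm, LS. simpl. rewrite SS.
      rewrite <- A. rewrite (proj_idem _ _ _ _ H); [reflexivity|apply Iv].
    + intros x. apply Iv.
    + apply Sp.
  - intros a. split; [|split].
    + exists (star a). symmetry. apply Iv.
    + apply Iv.
    + intros e [c Ec] Hae. subst e. unfold proj_le.
      pose proof (Sm a (plus c)) as E. rewrite Hae, Lp, Sp in E. simpl in E. exact E.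
Qed.
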